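(* Let $S\subset\mathbb{R}^2$ be a set of at least $4$ points in general position and let $a,b,c\in S$ be distinct. If $ab$ is an exit edge of $S$ with witness $c$, then $ac$ is not an exit edge of $S$ with witness $b$, and $bc$ is not an exit edge of $S$ with witness $a$.
   Context: General position: no three points collinear. For distinct $a,b,c\in S$, the segment $ab$ is an exit edge of $S$ with witness $c$ if there is no $p\in S$ such that the line through $a$ and $p$ strictly separates $b$ from $c$, and there is no $p\in S$ such that the line through $b$ and $p$ strictly separates $a$ from $c$. *)

(* Defs.v *)
(* points of R^2 as pairs of reals; a finite point set as a
   duplicate-free list. *)
From Stdlib Require Import Reals List.
Open Scope R_scope.

Definition point := (R * R)%type.

(* Twice the signed area of triangle pqr: positive iff r lies strictly to
   the left of the directed line pq; zero iff p, q, r are collinear. *)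
Definition orient (p q r : point) : R :=
  (fst q - fst p) * (snd r - snd p) - (snd q - snd p) * (fst r - fst p).

Definition collinear (p q r : point) : Prop := orient p q r = 0.

Definition general_position (S : list point) : Prop :=
  forall p q r, In p S -> In q S -> In r S ->
    p <> q -> q <> r -> p <> r -> ~ collinear p q r.

Definition strictly_separates (a p x y : point) : Prop :=
  a <> p /\ orient a p x * orient a p y < 0.

Definition exit_edge (S : list point) (a b c : point) : Prop :=
  In a S /\ In b S /\ In c S /\ a <> b /\ b <> c /\ a <> c /\
  (~ exists p, In p S /\ strictly_separates a p b c) /\
  (~ exists p, In p S /\ strictly_separates b p a c).

(* Main.v *)
Require Import Defs.
From Stdlib Require Import Reals List Lra Lia Classical.
Open Scope R_scope.

Lemma key (a b c d : point) :
  a <> d -> b <> d -> c <> d ->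
  orient d b c <> 0 -> orient a d c <> 0 -> orient a b d <> 0 ->
  strictly_separates a d b c \/ strictly_separates b d a c \/
  strictly_separates c d a b.
Proof.
  intros had hbd hcd HA HB HC.
  unfold strictly_separates.
  assert (E1 : orient a d b = - orient a b d) by (unfold orient; ring).
  assert (E2 : orient b d a = orient a b d) by (unfold orient; ring).
  assert (E3 : orient b d c = - orient d b c) by (unfold orient; ring).
  assert (E4 : orient c d a = - orient a d c) by (unfold orient; ring).
  assert (E5 : orient c d b = orient d b c) by (unfold orient; ring).
  rewrite E1, E2, E3, E4, E5.
  set (A := orient d b c) in *; set (B := orient a d c) in *;
  set (C := orient a b d) in *.
  destruct (Rlt_or_le 0 A); destruct (Rlt_or_le 0 B); destruct (Rlt_or_le 0 C).
  all: first [ left; split; [exact had|nra]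
             | right; left; split; [exact hbd|nra]
             | right; right; split; [exact hcd|nra] ].
Qed.

Lemma fourth (S : list point) (a b c : point) :
  NoDup S -> (4 <= length S)%nat ->
  exists d, In d S /\ d <> a /\ d <> b /\ d <> c.
Proof.
  intros HN HL.
  destruct (classic (exists d, In d S /\ ~ In d (a :: b :: c :: nil))) as [[d [H1 H2]]|H].
  - exists d; simpl in H2; intuition.
  - exfalso.
    assert (Hi : incl S (a :: b :: c :: nil)).
    { intros x Hx. destruct (classic (In x (a :: b :: c :: nil))); auto.
      exfalso; apply H; eauto. }
    pose proof (NoDup_incl_length HN Hi). simpl in *. lia.
Qed.

Theorem mainTheorem3 (S : list point) (a b c : point) :
  NoDup S -> (4 <= length S)%nat -> general_position S ->
  In a S -> In b S -> In c S -> a <> b -> b <> c -> a <> c ->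
  exit_edge S a b c ->
  ~ exit_edge S a c b /\ ~ exit_edge S b c a.
Proof.
  intros HN HL HG Ha Hb Hc hab hbc hac HE.
  destruct (fourth S a b c HN HL) as [d [Hd [hda [hdb hdc]]]].
  assert (HA : orient d b c <> 0) by (apply (HG d b c); auto).
  assert (HB : orient a d c <> 0) by (apply (HG a d c); auto).
  assert (HC : orient a b d <> 0) by (apply (HG a b d); auto).
  destruct HE as [_ [_ [_ [_ [_ [_ [N1 N2]]]]]]].
  assert (sym : forall p q x y, strictly_separates p q x y -> strictly_separates p q y x).
  { unfold strictly_separates; intros p q x y [h1 h2]; split; auto; lra. }
  destruct (key a b c d) as [K|[K|K]]; auto.
  - exfalso; apply N1; exists d; auto.
  - exfalso; apply N2; exists d; auto.
  - split; intros [_ [_ [_ [_ [_ [_ [M1 M2]]]]]]].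
    + apply M2; exists d; auto.
    + apply M2; exists d; auto.
Qed.
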